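(* Let $G$ be a finite group, $H\subset G$ a subgroup and $p\in[1,+\infty]$. Then $A_p(H)\leq A_p(G)$.
   Context: For a finite group $G$, $A_p(G)=\big(\sum_\rho\dim(\rho)^p\big)^{1/p}$ for $p<\infty$ and $A_\infty(G)=\max_\rho\dim(\rho)$, where $\rho$ runs over the isomorphism classes of irreducible complex linear representations of $G$. *)

(* Defs.v *)
From HB Require Import structures.
From mathcomp Require Import all_boot all_order all_algebra all_fingroup all_solvable all_field all_character.
From mathcomp Require Import all_classical all_reals all_analysis.
Set Implicit Arguments. Unset Strict Implicit. Unset Printing Implicit Defensive.
Import Order.TTheory GRing.Theory Num.Theory.
Local Open Scope ring_scope.

(* dim(rho) for the i-th irreducible complex representation 'Chi_i of G
   (irreducible characters 'chi_i, i : Iirr G, index the isomorphism classes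
   of irreducible complex representations; 'Chi_i affords 'chi_i). *)
Definition irr_dim (gT : finGroupType) (G : {group gT}) (i : Iirr G) : nat :=
  irr_degree (socle_of_Iirr i).

Definition Ap (R : realType) (p : \bar R) (gT : finGroupType) (G : {group gT}) : R :=
  match p with
  | EFin q => powR (\sum_(i : Iirr G) powR (irr_dim i)%:R q) q^-1
  | +oo%E => ((\max_(i : Iirr G) irr_dim i)%N)%:R
  | -oo%E => 0
  end.

(* Main.v *)
Require Import Defs.
From mathcomp Require Import all_boot all_order all_algebra all_fingroup all_solvable all_field all_character.
From mathcomp Require Import all_classical all_reals all_analysis.
Import Order.TTheory GRing.Theory Num.Theory.
Local Open Scope ring_scope.
Lemma key (gT : finGroupType) (G H : {group gT}) : (H \subset G)%g ->
 exists m : Iirr G -> Iirr H -> nat,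
  (forall i, irr_dim i = \sum_j m i j * irr_dim j)%N /\ (forall j, exists i, 0 < m i j)%N.
Proof.
move=> sHG.
have Nm i j : '['Res[H] 'chi[G]_i, 'chi_j] \in Num.nat.
  by rewrite Cnat_cfdot_char ?cfRes_char ?irr_char.
exists (fun i j => Num.truncn '['Res[H] 'chi[G]_i, 'chi_j]); split.
  move=> i; apply/eqP; rewrite -(eqr_nat algC) -irr1_degree.
  rewrite -(cfRes1 H) {1}[cfRes _ _]cfun_sum_cfdot sum_cfunE natr_sum.
  apply/eqP/eq_bigr => j _; rewrite cfunE natrM truncnK // irr1_degree //.
move=> j; have /neq0_has_constt [i] := Ind_irr_neq0 j sHG.
rewrite constt_Ind_Res irr_consttE => nz; exists i.
rewrite lt0n; apply: contra nz => /eqP e.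
by rewrite -(truncnK (Nm i j)) e.
Qed.

Lemma powsplit (R : realType) (q x : R) : 0 < x -> x `^ q = x * x `^ (q - 1).
Proof.
move=> x0; have E : q = 1 + (q - 1) by rewrite addrC subrK.
rewrite {1}E (@powRD _ x 1 (q - 1)) ?powRr1 ?ltW //.
by rewrite (lt0r_neq0 x0) implybT.
Qed.

Lemma dim_gt0 (gT : finGroupType) (G : {group gT}) (i : Iirr G) : (0 < irr_dim i)%N.
Proof. exact: irr_degree_gt0. Qed.

Theorem lemma7p1 (gT : finGroupType) (G H : {group gT}) (R : realType) (p : \bar R) :
  (H \subset G)%g -> (1%:E <= p)%E -> (Ap p H <= Ap p G)%R.
Proof.
move=> sHG; have [m [Hd Hm]] := key _ _ _ sHG.
have le_dim i j : (0 < m i j)%N -> (irr_dim j <= irr_dim i)%N.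
  move=> mpos; rewrite Hd (bigD1 j) //=.
  exact: leq_trans (leq_pmull _ mpos) (leq_addr _ _).
case: p => [q||] //=; last first.
  move=> _; rewrite ler_nat; apply/bigmax_leqP => j _.
  have [i /le_dim/leq_trans] := Hm j; apply; exact: leq_bigmax.
rewrite lee_fin => q1.
have q0 : 0 <= q by apply: le_trans q1.
apply: ge0_ler_powR; rewrite ?invr_ge0 ?nnegrE ?sumr_ge0 //; try by move=> *; rewrite powR_ge0.
pose e (j : Iirr H) : R := (irr_dim j)%:R.
pose d (i : Iirr G) : R := (irr_dim i)%:R.
have e0 j : 0 < e j by rewrite ltr0n dim_gt0.
have d0 i : 0 < d i by rewrite ltr0n dim_gt0.
have q10 : 0 <= q - 1 by rewrite subr_ge0.
apply: (@le_trans _ _ (\sum_j \sum_i (m i j)%:R * e j `^ q)).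
  apply: ler_sum => j _; have [i0 mi0] := Hm j.
  rewrite (bigD1 i0) //= -[X in X <= _]addr0; apply: lerD.
    by rewrite ler_peMl ?powR_ge0 // ler1n.
  by apply: sumr_ge0 => i _; rewrite mulr_ge0 ?powR_ge0.
rewrite exchange_big /=; apply: ler_sum => i _.
rewrite [X in _ <= X](powsplit _ _ _ (d0 i)) /d {1}Hd natr_sum mulr_suml.
apply: ler_sum => j _; rewrite natrM -mulrA.
have [mz|mpos] := posnP (m i j).
  by rewrite mz !mul0r.
rewrite ler_wpM2l //.
rewrite (powsplit _ _ _ (e0 j)) ler_wpM2l ?(ltW (e0 j)) //.
by apply: ge0_ler_powR; rewrite ?nnegrE ?(ltW (e0 j)) ?ler0n // ler_nat le_dim.
Qed.
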